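(* Let $L$ be a principal element lattice and $n\ge1$. Then the following statements are equivalent: (1) Every proper element of $L$ is a quasi $n$-absorbing element of $L$. (2) For every $a,b\in L_*$, $a^n=ca^nb$ for some $c\in L$ or $a^{n-1}b=da^nb$ for some $d\in L$. (3) For all $a_1,a_2,\dots,a_{n+1}\in L_*$, $(a_1\wedge a_2\wedge\cdots\wedge a_n)^n\le c\,a_1a_2\cdots a_{n+1}$ for some $c\in L$ or $(a_1\wedge a_2\wedge\cdots\wedge a_n)^{n-1}a_{n+1}\le d\,a_1a_2\cdots a_{n+1}$ for some $d\in L$.
   Context: A multiplicative lattice is a complete lattice $L$ with least element $0$ and compact greatest element $1$, equipped with a commutative, associative product that distributes over arbitrary joins and has $1$ as multiplicative identity. An element $a$ is compact if $a\le\bigvee_{\alpha\in I}a_\alpha$ implies $a\le\bigvee_{\alpha\in I_0}a_\alpha$ for some finite $I_0\subseteq I$; $L_*$ denotes the set of compact elements. For $x,y\in L$, $(x:y)=\bigvee\{z: zy\le x\}$. An element $e$ is principal if $a\wedge be=((a:e)\wedge b)e$ and $(ae\vee b):e=(b:e)\vee a$ for all $a,b\in L$; a principal element lattice is a multiplicative lattice in which every element is principal. $a^0=1$. A proper element $q$ ($q<1$) is quasi $n$-absorbing if whenever $a^nb\le q$ for some $a,b\in L_*$, then $a^n\le q$ or $a^{n-1}b\le q$. *)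

(* Defs.v *)
From Stdlib Require Import List.
Import ListNotations.
Set Implicit Arguments.

Record MultLattice := {
  carrier :> Type;
  le : carrier -> carrier -> Prop;
  sup : (carrier -> Prop) -> carrier;
  mul : carrier -> carrier -> carrier;
  one : carrier;
  le_refl : forall x, le x x;
  le_trans : forall x y z, le x y -> le y z -> le x z;
  le_antisym : forall x y, le x y -> le y x -> x = y;
  sup_ub : forall (S : carrier -> Prop) x, S x -> le x (sup S);
  sup_least : forall (S : carrier -> Prop) y,
      (forall x, S x -> le x y) -> le (sup S) y;
  mulC : forall x y, mul x y = mul y x;
  mulA : forall x y z, mul x (mul y z) = mul (mul x y) z;
  mul1x : forall x, mul one x = x;
  mul_sup : forall a (S : carrier -> Prop),
      mul a (sup S) = sup (fun y => exists x, S x /\ y = mul a x);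
  one_top : forall x, le x one;
  one_compact : forall (S : carrier -> Prop), le one (sup S) ->
      exists l : list carrier, (forall x, In x l -> S x) /\
                               le one (sup (fun x => In x l))
}.

Arguments le {L} x y : rename.
Arguments sup {L} S : rename.
Arguments mul {L} x y : rename.
Arguments one {L} : rename.

Section Ops.
Variable L : MultLattice.

Definition zero : L := sup (fun _ => False).
Definition join (a b : L) : L := sup (fun x => x = a \/ x = b).
Definition meet (a b : L) : L := sup (fun z => le z a /\ le z b).

Definition compact (a : L) : Prop :=
  forall (S : L -> Prop), le a (sup S) ->
    exists l : list L, (forall x, In x l -> S x) /\ le a (sup (fun x => In x l)).

Definition colon (x y : L) : L := sup (fun z => le (mul z y) x).

Definition principal (e : L) : Prop :=
  (forall a b : L, meet a (mul b e) = mul (meet (colon a e) b) e) /\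
  (forall a b : L, colon (join (mul a e) b) e = join (colon b e) a).

Definition principal_element_lattice : Prop := forall e : L, principal e.

Fixpoint pow (a : L) (n : nat) : L :=
  match n with O => one | S k => mul a (pow a k) end.

Definition proper (q : L) : Prop := le q one /\ q <> one.

Definition quasi_n_absorbing (n : nat) (q : L) : Prop :=
  proper q /\
  forall a b : L, compact a -> compact b ->
    le (mul (pow a n) b) q -> le (pow a n) q \/ le (mul (pow a (n - 1)) b) q.

Definition meet_list (l : list L) : L := fold_right meet one l.
Definition prod_list (l : list L) : L := fold_right mul one l.

End Ops.
Arguments zero {L}.
Arguments join {L} a b.
Arguments meet {L} a b.
Arguments compact {L} a.
Arguments colon {L} x y.
Arguments principal {L} e.
Arguments pow {L} a n.
Arguments proper {L} q.
Arguments quasi_n_absorbing {L} n q.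
Arguments meet_list {L} l.
Arguments prod_list {L} l.

(* Main.v *)
Require Import Defs.
From Stdlib Require Import List Arith Lia Classical.

Arguments le_refl {m} x.
Arguments le_trans {m} x y z _ _.
Arguments le_antisym {m} x y _ _.
Arguments sup_ub {m} S x _.
Arguments sup_least {m} S y _.
Arguments mulC {m} x y.
Arguments mulA {m} x y z.
Arguments mul1x {m} x.
Arguments mul_sup {m} a S.
Arguments one_top {m} x.
Arguments one_compact {m} S _.

Section Aux.
Variable L : MultLattice.
Implicit Types x y z a b c : L.

Lemma ltr x y z : le x y -> le y z -> le x z.
Proof. apply le_trans. Qed.
Lemma lrefl x : le x x.
Proof. apply le_refl. Qed.

Lemma sup_mono (S T : L -> Prop) : (forall x, S x -> T x) -> le (sup S) (sup T).
Proof. intros H. apply sup_least. intros x Hx. apply sup_ub. auto. Qed.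

Lemma join_eq x y : le y x -> join x y = x.
Proof.
  intros H. apply le_antisym.
  - apply sup_least. intros z [->| ->]; auto using lrefl.
  - apply sup_ub. auto.
Qed.

Lemma join_lub x y z : le x z -> le y z -> le (join x y) z.
Proof. intros. apply sup_least. intros w [->| ->]; auto. Qed.

Lemma zero_le x : le (@zero L) x.
Proof. apply sup_least. intros _ []. Qed.

Lemma mul_mono_r a x y : le x y -> le (mul a x) (mul a y).
Proof.
  intros H.
  replace (mul a y) with (mul a (join y x)) by (rewrite join_eq; auto).
  unfold join. rewrite mul_sup. apply sup_ub. exists x. auto.
Qed.

Lemma mul_mono_l a x y : le x y -> le (mul x a) (mul y a).
Proof. intros H. rewrite (mulC x), (mulC y). apply mul_mono_r, H. Qed.

Lemma mul_mono x y z w : le x y -> le z w -> le (mul x z) (mul y w).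
Proof. intros. apply ltr with (mul y z). apply mul_mono_l; auto. apply mul_mono_r; auto. Qed.

Lemma mul_le c x : le (mul c x) x.
Proof. rewrite <- (mul1x x) at 2. apply mul_mono_l, one_top. Qed.

Lemma colon_mul x y : le (mul (colon x y) y) x.
Proof.
  unfold colon. rewrite mulC, mul_sup. apply sup_least.
  intros w [z [Hz ->]]. rewrite mulC. exact Hz.
Qed.

Lemma colon_ge x y z : le (mul z y) x -> le z (colon x y).
Proof. intros H. apply sup_ub. exact H. Qed.

Lemma meet_l a b : le (meet a b) a.
Proof. apply sup_least. intros z [H _]; exact H. Qed.
Lemma meet_r a b : le (meet a b) b.
Proof. apply sup_least. intros z [_ H]; exact H. Qed.
Lemma meet_glb a b z : le z a -> le z b -> le z (meet a b).
Proof. intros. apply sup_ub. auto. Qed.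
Lemma meet_eq a b : le a b -> meet a b = a.
Proof. intros. apply le_antisym. apply meet_l. apply meet_glb; auto using lrefl. Qed.

Lemma principal_div x y : principal y -> le x y -> x = mul (colon x y) y.
Proof.
  intros [H1 _] Hxy. specialize (H1 x one).
  rewrite mul1x, (meet_eq _ _ Hxy), (meet_eq _ _ (one_top _)) in H1. exact H1.
Qed.

Lemma all_compact : principal_element_lattice L -> forall e : L, compact e.
Proof.
  intros HP e S He. set (s := sup S).
  set (T := fun x => exists a, (S a \/ a = zero) /\ x = colon a s).
  set (c := sup T).
  assert (Hs : le s (mul c s)).
  { apply sup_least. intros a Ha.
    rewrite (principal_div _ _ (HP s) (sup_ub _ _ Ha)). apply mul_mono_l.
    apply sup_ub. exists a; auto. }
  assert (Hc : le one c).
  { destruct (HP s) as [_ H2]. specialize (H2 c zero).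
    rewrite join_eq in H2 by apply zero_le.
    apply ltr with (colon (mul c s) s).
    - apply colon_ge. rewrite mul1x. exact Hs.
    - rewrite H2. apply join_lub; [|apply lrefl]. apply sup_ub. exists zero. auto. }
  destruct (one_compact T Hc) as [l [HlT Hl1]].
  assert (Hlist : forall l, (forall x, In x l -> T x) -> exists l',
     (forall a, In a l' -> S a) /\ forall x, In x l -> le (mul x s) (sup (fun y => In y l'))).
  { induction l0 as [|x t IH]; intros HT.
    - exists nil. split; intros ? [].
    - destruct IH as [l' [H1 H2]]. { intros; apply HT; right; auto. }
      destruct (HT x (or_introl eq_refl)) as [a [[Ha| ->] ->]].
      + exists (a :: l'). split.
        * intros b [<-|Hb]; auto.
        * intros y [<-|Hy].
          -- apply ltr with a. apply colon_mul. apply sup_ub. left; auto.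
          -- apply ltr with (sup (fun y => In y l')). auto.
             apply sup_mono. intros; right; auto.
      + exists l'. split; auto. intros y [<-|Hy]; auto.
        apply ltr with zero. apply colon_mul. apply zero_le. }
  destruct (Hlist l HlT) as [l' [H1 H2]].
  exists l'. split; auto.
  apply ltr with s; [exact He|].
  apply ltr with (mul (sup (fun x => In x l)) s).
  - rewrite <- (mul1x s) at 1. apply mul_mono_l, Hl1.
  - rewrite mulC, mul_sup. apply sup_least. intros y [x [Hx ->]].
    rewrite mulC. auto.
Qed.

Lemma pow_mono x y k : le x y -> le (pow x k) (pow y k).
Proof. intros H. induction k; simpl. apply lrefl. apply mul_mono; auto. Qed.

Lemma pow_meet_prod (l : list L) : le (pow (meet_list l) (length l)) (prod_list l).
Proof.
  induction l as [|h t IH]; simpl. apply lrefl.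
  apply mul_mono. apply meet_l.
  apply ltr with (pow (meet_list t) (length t)); auto. apply pow_mono, meet_r.
Qed.

Lemma prod_app (l : list L) z : prod_list (l ++ z :: nil) = mul (prod_list l) z.
Proof.
  induction l as [|h t IH]; simpl. rewrite mulC, mul1x. reflexivity.
  unfold prod_list in *. simpl in IH. rewrite IH. apply mulA.
Qed.

Lemma prod_repeat a k : prod_list (repeat a k) = pow a k.
Proof. induction k; simpl; auto. unfold prod_list in *. rewrite IHk. auto. Qed.

Lemma meet_repeat a k : 1 <= k -> meet_list (repeat a k) = a.
Proof.
  intros Hk. destruct k. lia. clear Hk. induction k; simpl.
  apply meet_eq, one_top.
  unfold meet_list in *. simpl in IHk. rewrite IHk. apply meet_eq, lrefl.
Qed.

End Aux.

(* Indices: the paper's a_1, ..., a_{n+1} are a 0, ..., a n. *)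
Theorem mainTheorem11 (L : MultLattice) (n : nat) :
  principal_element_lattice L -> 1 <= n ->
  ((forall q : L, proper q -> quasi_n_absorbing n q) <->
   (forall a b : L, compact a -> compact b ->
      (exists c : L, pow a n = mul (mul c (pow a n)) b) \/
      (exists d : L, mul (pow a (n - 1)) b = mul (mul d (pow a n)) b)))
  /\
  ((forall a b : L, compact a -> compact b ->
      (exists c : L, pow a n = mul (mul c (pow a n)) b) \/
      (exists d : L, mul (pow a (n - 1)) b = mul (mul d (pow a n)) b)) <->
   (forall a : nat -> L, (forall i, i <= n -> compact (a i)) ->
      (exists c : L, le (pow (meet_list (map a (seq 0 n))) n)
                        (mul c (prod_list (map a (seq 0 (S n)))))) \/
      (exists d : L, le (mul (pow (meet_list (map a (seq 0 n))) (n - 1)) (a n))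
                        (mul d (prod_list (map a (seq 0 (S n)))))))).
Proof.
  intros HP Hn.
  assert (E2 : forall a b : L,
    ((exists c : L, pow a n = mul (mul c (pow a n)) b) \/
     (exists d : L, mul (pow a (n - 1)) b = mul (mul d (pow a n)) b)) <->
    (le (pow a n) (mul (pow a n) b) \/ le (mul (pow a (n - 1)) b) (mul (pow a n) b))).
  { intros a b. split.
    - intros [[c Hc]|[d Hd]]; [left|right].
      + rewrite Hc at 1. rewrite <- mulA. apply mul_le.
      + rewrite Hd at 1. rewrite <- mulA. apply mul_le.
    - intros [H|H]; [left|right].
      + exists (colon (pow a n) (mul (pow a n) b)). rewrite <- mulA.
        apply principal_div; auto.
      + exists (colon (mul (pow a (n - 1)) b) (mul (pow a n) b)). rewrite <- mulA.
        apply principal_div; auto. }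
  assert (Hdiv : forall y P : L, le y P -> exists c, le y (mul c P)).
  { intros y P H. exists (colon y P). rewrite <- (principal_div _ _ _ (HP P) H). apply lrefl. }
  split; split.
  - intros H1 a b _ _. apply E2.
    destruct (classic (mul (pow a n) b = one)) as [Heq|Hne].
    + left. rewrite Heq. apply one_top.
    + destruct (H1 _ (conj (one_top _) Hne)) as [_ H].
      apply H; try apply all_compact; auto. apply lrefl.
  - intros H2 q Hq. split; auto. intros a b Ha Hb Hab.
    destruct (proj1 (E2 a b) (H2 a b Ha Hb)) as [H|H]; [left|right];
      eapply ltr; eauto.
  - intros H2 f _.
    set (x := meet_list (map f (seq 0 n))).
    assert (HP0 : le (mul (pow x n) (f n)) (prod_list (map f (seq 0 (S n))))).
    { rewrite seq_S, map_app. simpl. rewrite prod_app. apply mul_mono_l.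
      pose proof (pow_meet_prod _ (map f (seq 0 n))) as Hm.
      rewrite length_map, length_seq in Hm. exact Hm. }
    destruct (proj1 (E2 x (f n)) (H2 _ _ (all_compact _ HP _) (all_compact _ HP _))) as [H|H];
      [left|right]; apply Hdiv; eapply ltr; eauto.
  - intros H3 a b _ _. apply E2.
    set (f := fun i => if Nat.ltb i n then a else b).
    assert (Hmap : map f (seq 0 n) = repeat a n).
    { rewrite <- (length_seq n 0) at 2. rewrite <- map_const.
      apply map_ext_in. intros i Hi. apply in_seq in Hi. unfold f.
      destruct (Nat.ltb_spec i n); auto; lia. }
    assert (Hfn : f n = b). { unfold f. destruct (Nat.ltb_spec n n); auto; lia. }
    assert (HP0 : prod_list (map f (seq 0 (S n))) = mul (pow a n) b).
    { rewrite seq_S, map_app. simpl. rewrite prod_app. rewrite Hmap, prod_repeat, Hfn. auto. }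
    destruct (H3 f (fun _ _ => all_compact _ HP _)) as [[c Hc]|[d Hd]];
      rewrite HP0, Hmap, meet_repeat in * by exact Hn; [left|right].
    + eapply ltr; [exact Hc|apply mul_le].
    + rewrite Hfn in Hd. eapply ltr; [exact Hd|apply mul_le].
Qed.
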